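(* Suppose $F$ is symmetric, i.e. $F(-i)=1-F(i)$ for all $i\in[-1/2,1/2]$, and let $\sigma=q_H/q_L$. Then the value $V(R)$ of the recommendation system, as a function of the threshold $R\in(0,1)$, is (i) decreasing in $R$ if $\sigma<1$; (ii) increasing in $R$ if $\sigma>1$; (iii) constant in $R$ if $\sigma=1$.
   Context: Setting. Consumer types are $i\in[-1/2,1/2]$, distributed according to a continuous cumulative distribution function $F$ with full support on $[-1/2,1/2]$. A product has a quality vector $(Q_1,Q_2)\in\{0,1\}^2$; a type-$i$ consumer gets payoff $(1/2+i)Q_1+(1/2-i)Q_2$ from it. The versions $(1,1),(1,0),(0,1),(0,0)$ have prior probabilities $q_H,q_1,q_2,q_L$ respectively, all strictly positive and summing to $1$. One product carries a recommendation from a sender whose type is drawn from $F$ independently of the product; given a threshold $R\in(0,1)$, the sender gives a buy recommendation $B$ if her payoff from the product is at least $R$ and a don't-buy recommendation $D$ otherwise. Let $\phi_1(R)=1-F(R-1/2)$, $\phi_2(R)=F(1/2-R)$, $\pi^B=q_H+q_1\phi_1(R)+q_2\phi_2(R)$, $\pi^D=1-\pi^B$. Posteriors: $p^B_H=q_H/\pi^B$, $p^B_1=q_1\phi_1(R)/\pi^B$, $p^B_2=q_2\phi_2(R)/\pi^B$, $p^B_L=0$; $p^D_H=0$, $p^D_1=q_1(1-\phi_1(R))/\pi^D$, $p^D_2=q_2(1-\phi_2(R))/\pi^D$, $p^D_L=q_L/\pi^D$. For $r\in\{B,D\}$ let $U_i^r=p_H^r+(1/2+i)p_1^r+(1/2-i)p_2^r$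 and $U_i^0=q_H+(1/2+i)q_1+(1/2-i)q_2$. The value of the recommendation system is $V(R)=\pi^B\int_{-1/2}^{1/2}\max\{U_i^B-U_i^0,0\}\,dF(i)+\pi^D\int_{-1/2}^{1/2}\max\{U_i^D-U_i^0,0\}\,dF(i)$, the expected payoff gain of a receiver drawn from $F$ who optimally chooses between the recommended product and an unrecommended alternative. *)

(* Defs.v *)
From mathcomp Require Import all_boot all_order all_algebra.
From mathcomp Require Import all_classical all_reals all_analysis.
Import Order.TTheory GRing.Theory Num.Theory.
Import numFieldNormedType.Exports.
Local Open Scope classical_set_scope.
Local Open Scope ring_scope.

Definition cdf_of {R : realType} (mu : probability R R) (x : R) : R :=
  fine (mu `]-oo, x]%classic).

Section Model.
Context {R : realType} (mu : probability R R) (qH q1 q2 : R).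

Let F := cdf_of mu.

Definition types : set R := `[(- (1/2)), 1/2]%classic.

Definition phi1 (r : R) : R := 1 - F (r - 1/2).
Definition phi2 (r : R) : R := F (1/2 - r).

Definition piB (r : R) : R := qH + q1 * phi1 r + q2 * phi2 r.
Definition piD (r : R) : R := 1 - piB r.

Definition pB_H (r : R) : R := qH / piB r.
Definition pB_1 (r : R) : R := q1 * phi1 r / piB r.
Definition pB_2 (r : R) : R := q2 * phi2 r / piB r.

Definition pD_H (r : R) : R := 0.
Definition pD_1 (r : R) : R := q1 * (1 - phi1 r) / piD r.
Definition pD_2 (r : R) : R := q2 * (1 - phi2 r) / piD r.

Definition UB (r i : R) : R := pB_H r + (1/2 + i) * pB_1 r + (1/2 - i) * pB_2 r.
Definition UD (r i : R) : R := pD_H r + (1/2 + i) * pD_1 r + (1/2 - i) * pD_2 r.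
Definition U0 (i : R) : R := qH + (1/2 + i) * q1 + (1/2 - i) * q2.

(* Value of the recommendation system; the integrals are w.r.t. dF,
   i.e. Lebesgue integrals against mu over the type space. *)
Definition value (r : R) : R :=
  piB r * (\int[mu]_(i in types) Num.max (UB r i - U0 i) 0)
  + piD r * (\int[mu]_(i in types) Num.max (UD r i - U0 i) 0).

End Model.

(* Main.v *)
Require Import Defs.
From mathcomp Require Import all_boot all_order all_algebra.
From mathcomp Require Import all_classical all_reals all_analysis.
From mathcomp Require Import ring lra measurable_realfun.
Import Order.TTheory GRing.Theory Num.Theory.
Import numFieldNormedType.Exports.
Local Open Scope classical_set_scope.
Local Open Scope ring_scope.

Lemma prob_fin (R : realType) (mu : probability R R) (A : set R) :
  measurable A -> mu A = (fine (mu A))%:E.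
Proof. by move=> mA; rewrite fineK// fin_num_measure. Qed.

Lemma F_hi (R : realType) (mu : probability R R) (x : R) :
  mu `[(- (1/2)), 1/2]%classic = 1%E -> 1/2 <= x -> cdf_of mu x = 1.
Proof.
move=> supp hx; rewrite /cdf_of.
suff -> : mu `]-oo, x]%classic = 1%E by [].
apply/le_anti/andP; split; first exact: probability_le1.
rewrite -supp; apply: le_measure; rewrite ?inE //.
move=> y /=; rewrite !in_itv /= => /andP[_ hy]; exact: le_trans hy hx.
Qed.

Lemma F_lo (R : realType) (mu : probability R R) (x : R) :
  mu `[(- (1/2)), 1/2]%classic = 1%E -> x < - (1/2) -> cdf_of mu x = 0.
Proof.
move=> supp hx; rewrite /cdf_of.
suff -> : mu `]-oo, x]%classic = 0%E by [].
apply/le_anti/andP; split; last exact: measure_ge0.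
have : mu (~` `[(- (1/2)), 1/2]%classic) = 0%E.
  by rewrite probability_setC// supp subee.
move=> <-; apply: le_measure; rewrite ?inE //; first exact: measurableC.
move=> y /=; rewrite !in_itv /= => hy /andP[hy1 _].
by move: (le_lt_trans hy1 (le_lt_trans hy hx)); rewrite ltxx.
Qed.

Lemma F_sym_all (R : realType) (mu : probability R R) :
  mu `[(- (1/2)), 1/2]%classic = 1%E ->
  (forall i : R, - (1/2) <= i <= 1/2 -> cdf_of mu (- i) = 1 - cdf_of mu i) ->
  forall x, cdf_of mu (- x) = 1 - cdf_of mu x.
Proof.
move=> supp sym x.
have [hx|hx] := ltP (1/2) x.
  rewrite (F_hi _ _ _ supp (ltW hx)) (F_lo _ _ _ supp) ?subrr// ltrN2 //.
have [hx'|hx'] := ltP x (- (1/2)).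
  rewrite (F_lo _ _ _ supp hx') (F_hi _ _ _ supp) ?subr0// lerNr ltW//.
by apply: sym; rewrite hx hx'.
Qed.

Lemma G_eq (R : realType) (mu : probability R R) :
  continuous (cdf_of mu) ->
  forall x : R, mu `]-oo, x[%classic = (cdf_of mu x)%:E.
Proof.
move=> Fc x.
apply/le_anti/andP; split.
  rewrite /cdf_of -prob_fin//; apply: le_measure; rewrite ?inE//.
  by move=> y /=; rewrite !in_itv /= => /ltW.
rewrite (prob_fin _ mu) // lee_fin; apply/ler_addgt0Pr => e e0.
have := Fc x; move/cvgrPdist_lt/(_ e e0) => /nbhs_ballP [d /= d0 Hd].
have hb : ball x d (x - d / 2).
  rewrite -ball_normE /ball_ /= opprB addrC subrK ger0_norm ?divr_ge0 ?ltW//.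
  by rewrite ltr_pdivrMr// ltr_pMr// ltr1n.
have := Hd _ hb => /= /ltr_distlDr hlt.
have hle : cdf_of mu (x - d / 2) <= fine (mu `]-oo, x[%classic).
  rewrite /cdf_of fine_le ?fin_num_measure//; apply: le_measure; rewrite ?inE//.
  move=> y /=; rewrite !in_itv /= => hy; apply: (le_lt_trans hy).
  by rewrite ltrBlDr ltrDl divr_gt0.
by apply: (le_trans (ltW hlt)); rewrite lerD2r.
Qed.


Lemma mu_oc (R : realType) (mu : probability R R) (a b : R) : a < b ->
  mu `]a, b]%classic = (cdf_of mu b - cdf_of mu a)%:E.
Proof.
move=> ab.
have -> : `]a, b]%classic = `]-oo, b]%classic `\` `]-oo, a]%classic.
  apply/seteqP; split => y /=; rewrite !in_itv /=.
    by move=> /andP[h1 h2]; split => //; apply/negP; rewrite -ltNge.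
  by move=> [h1 /negP]; rewrite -ltNge => h2; rewrite h1 h2.
rewrite measureD//; last by rewrite ltey_eq fin_num_measure.
have -> : `]-oo, b]%classic `&` `]-oo, a]%classic = `]-oo, a]%classic.
  by apply: setIidr => y /=; rewrite !in_itv /= => h; apply: (le_trans h (ltW ab)).
by rewrite /cdf_of EFinB !fineK ?fin_num_measure.
Qed.

Lemma mu_co (R : realType) (mu : probability R R) (c d : R) :
  continuous (cdf_of mu) -> c < d ->
  mu `[c, d[%classic = (cdf_of mu d - cdf_of mu c)%:E.
Proof.
move=> Fc cd.
have -> : `[c, d[%classic = `]-oo, d[%classic `\` `]-oo, c[%classic.
  apply/seteqP; split => y /=; rewrite !in_itv /=.
    by move=> /andP[h1 h2]; split => //; apply/negP; rewrite -leNgt.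
  by move=> [h1 /negP]; rewrite -leNgt => h2; rewrite h1 h2.
rewrite measureD//; last by rewrite ltey_eq fin_num_measure.
have -> : `]-oo, d[%classic `&` `]-oo, c[%classic = `]-oo, c[%classic.
  by apply: setIidr => y /=; rewrite !in_itv /= => h; apply: (lt_trans h cd).
have h1 := G_eq _ mu Fc d; have h2 := G_eq _ mu Fc c.
by rewrite EFinB -h1 -h2.
Qed.

Lemma mu_sym (R : realType) (mu : probability R R) :
  mu `[(- (1/2)), 1/2]%classic = 1%E ->
  continuous (cdf_of mu) ->
  (forall i : R, - (1/2) <= i <= 1/2 -> cdf_of mu (- i) = 1 - cdf_of mu i) ->
  forall A : set R, measurable A -> mu A = pushforward mu (-%R : R -> R) A.
Proof.
move=> supp Fc sym A mA.
have Fs := F_sym_all _ mu supp sym.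
pose g := fun k : nat => [set` Interval (BSide false (1 *- k)) (BSide false (k%:R : R))].
have Gm : @ocitv R `<=` measurable by move=> X HX; apply: sub_sigma_algebra.
have Gg : forall k, @ocitv R (g k) by move=> k; exists (1 *- k, k%:R).
have cov : \bigcup_k g k = [set: R] by exact: bigcup_itvT.
have m12 : forall X : set R, @ocitv R X -> mu X = pushforward mu (-%R : R -> R) X.
  move=> X /ocitvP [->|[x x12 ->]]; first by rewrite /pushforward preimage_set0 !measure0.
  rewrite /pushforward opp_preimage_itvbndbnd /= mu_oc //.
  have := mu_co _ mu (- x.2) (- x.1) Fc; rewrite ltrN2 => /(_ x12) ->.
  rewrite !Fs; congr (_%:E).
  ring.
have fin : forall k, (mu (g k) < +oo)%E.
  by move=> k; rewrite ltey_eq fin_num_measure//; apply: Gm.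
exact: (@g_sigma_algebra_measure_unique _ R R (@ocitv R) Gm g Gg cov mu
  (pushforward mu (-%R : R -> R)) (@ocitvI R) m12 fin A mA).
Qed.

Lemma types_meas (R : realType) : measurable (types (R:=R)).
Proof. exact: measurable_itv. Qed.

Lemma mfunP (R : realType) (c s : R) :
  measurable_fun (T:=R) (U:=\bar R) (types (R:=R)) (EFin \o (fun x : R => c + s * x)).
Proof.
apply/measurable_EFinP; apply: measurable_funD; first exact: measurable_cst.
apply: measurable_funM; first exact: measurable_cst.
exact: measurable_id.
Qed.

Lemma int_half (R : realType) (mu : probability R R) :
  mu `[(- (1/2)), 1/2]%classic = 1%E ->
  continuous (cdf_of mu) ->
  (forall i : R, - (1/2) <= i <= 1/2 -> cdf_of mu (- i) = 1 - cdf_of mu i) ->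
  (\int[mu]_(i in types) (1/2 + 1 * i)%:E = (1/2)%:E)%E /\
  (\int[mu]_(i in types) (1/2 + (-1) * i)%:E = (1/2)%:E)%E.
Proof.
move=> supp Fc sym.
have tyE : forall x : R, types x -> -(1/2) <= x <= 1/2.
  by move=> x; rewrite /types /= in_itv /=.
have Pge0 : forall x : R, types x -> (0 <= (1/2 + 1 * x)%:E)%E.
  by move=> x /tyE /andP[h1 h2]; rewrite lee_fin; lra.
have Mge0 : forall x : R, types x -> (0 <= (1/2 + (-1) * x)%:E)%E.
  by move=> x /tyE /andP[h1 h2]; rewrite lee_fin; lra.
set Ip := (\int[mu]_(i in types) (1/2 + 1 * i)%:E)%E.
set Im := (\int[mu]_(i in types) (1/2 + (-1) * i)%:E)%E.
have eqPM : Ip = Im.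
  rewrite /Ip (eq_measure_integral (pushforward mu (-%R : R -> R))); last first.
    by move=> A mA _; apply: mu_sym.
  rewrite ge0_integral_pushforward; first last.
  - by move=> x; rewrite inE; apply: Pge0.
  - exact: mfunP.
  - exact: types_meas.
  - exact: oppr_measurable.
  have -> : (-%R @^-1` types) = (types (R:=R)).
    by rewrite /types opp_preimage_itvbndbnd /= opprK.
  by apply: eq_integral => x _ /=; congr (_%:E); field.
have sum1 : (Ip + Im = 1)%E.
  rewrite /Ip /Im -ge0_integralD //; try exact: mfunP; try exact: types_meas.
  rewrite (eq_integral (cst 1%:E)); last first.
    move=> x _ /=; rewrite -EFinD; have -> : (1/2 + 1*x + (1/2 + -1*x) = 1 :> R) by field. by [].
  rewrite integral_cst; last exact: types_meas. rewrite [X in X = _]mul1e. exact: supp.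
have hI : Ip = (1/2)%:E.
  move: sum1; rewrite -eqPM; clear eqPM; case: Ip => [r| |] //= h.
  by congr (_%:E); move: h; rewrite -EFinD => -[]; lra.
split; first exact: hI.
exact: (etrans (esym eqPM) hI).
Qed.

Lemma mfunP2 (R : realType) (a c s : R) :
  measurable_fun (T:=R) (U:=\bar R) (types (R:=R)) (EFin \o (fun x : R => a * (c + s * x))).
Proof.
apply/measurable_EFinP; apply: measurable_funM; first exact: measurable_cst.
apply: measurable_funD; first exact: measurable_cst.
apply: measurable_funM; first exact: measurable_cst.
exact: measurable_id.
Qed.

Lemma Rint_PM (R : realType) (mu : probability R R) (a b : R) :
  mu `[(- (1/2)), 1/2]%classic = 1%E ->
  continuous (cdf_of mu) ->
  (forall i : R, - (1/2) <= i <= 1/2 -> cdf_of mu (- i) = 1 - cdf_of mu i) ->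
  0 <= a -> 0 <= b ->
  \int[mu]_(i in types) ((1/2 + 1 * i) * a + (1/2 + (-1) * i) * b) = (a + b) / 2.
Proof.
move=> supp Fc sym a0 b0.
have [hP hM] := int_half _ mu supp Fc sym.
have tyE : forall x : R, types x -> -(1/2) <= x <= 1/2.
  by move=> x; rewrite /types /= in_itv /=.
rewrite /Rintegral.
rewrite (eq_integral (fun x : R => (a * (1/2 + 1 * x))%:E + (b * (1/2 + (-1) * x))%:E)%E); last first.
  by move=> x _; rewrite -EFinD; congr (_%:E); ring.
rewrite ge0_integralD; first last.
- exact: mfunP2.
- by move=> x /tyE /andP[h1 h2]; rewrite lee_fin; apply: mulr_ge0 => //; lra.
- exact: mfunP2.
- by move=> x /tyE /andP[h1 h2]; rewrite lee_fin; apply: mulr_ge0 => //; lra.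
- exact: types_meas.
rewrite [X in (X + _)%E](eq_integral (fun x : R => a%:E * (1/2 + 1 * x)%:E)%E); last by move=> x _ /=; rewrite -EFinM.
rewrite [X in (_ + X)%E](eq_integral (fun x : R => b%:E * (1/2 + (-1) * x)%:E)%E); last by move=> x _ /=; rewrite -EFinM.
rewrite ge0_integralZl; first last.
- by rewrite lee_fin.
- by move=> x /tyE /andP[h1 h2]; rewrite lee_fin; lra.
- exact: mfunP.
- exact: types_meas.
rewrite ge0_integralZl; first last.
- by rewrite lee_fin.
- by move=> x /tyE /andP[h1 h2]; rewrite lee_fin; lra.
- exact: mfunP.
- exact: types_meas.
rewrite hP hM /=.
by rewrite !div1r mulrDl.
Qed.

Lemma F01 (R : realType) (mu : probability R R) (x : R) :
  0 <= cdf_of mu x <= 1.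
Proof.
rewrite /cdf_of; apply/andP; split; first by apply: fine_ge0; exact: measure_ge0.
rewrite -lee_fin fineK ?fin_num_measure//; exact: probability_le1.
Qed.

Lemma value_eq (R : realType) (mu : probability R R) (qH q1 q2 r : R) :
  mu `[(- (1/2)), 1/2]%classic = 1%E ->
  continuous (cdf_of mu) ->
  (forall i : R, - (1/2) <= i <= 1/2 -> cdf_of mu (- i) = 1 - cdf_of mu i) ->
  0 < qH -> 0 < q1 -> 0 < q2 -> 0 < 1 - qH - q1 - q2 ->
  value mu qH q1 q2 r =
  (qH * (2 * (1 - qH - q1 - q2) + q1 + q2) +
   phi1 mu r * ((q1 + q2) * ((1 - qH - q1 - q2) - qH))) / 2.
Proof.
move=> supp Fc sym hH h1 h2 hL.
have Fs := F_sym_all _ mu supp sym.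
have tyE : forall x : R, types x -> -(1/2) <= x <= 1/2.
  by move=> x; rewrite /types /= in_itv /=.
have e2 : phi2 mu r = phi1 mu r.
  by rewrite /phi2 /phi1 -Fs opprB.
have /andP[p0 p1] : 0 <= phi1 mu r <= 1.
  by rewrite /phi1; have /andP[u v] := F01 _ mu (r - 1/2); apply/andP; split; lra.
have [p pE] : exists p, phi1 mu r = p by eexists.
rewrite pE in p0 p1 e2 *.
set qL := 1 - qH - q1 - q2 in hL *.
pose A := qH * (qL + q2) + p * (q1 * qL - qH * q2).
pose B := qH * (qL + q1) + p * (q2 * qL - qH * q1).
have A0 : 0 <= A.
  have -> : A = (1 - p) * (qH * (qL + q2)) + p * (qL * (qH + q1)) by rewrite /A /qL; ring.
  apply: addr_ge0; apply: mulr_ge0; try lra; apply: mulr_ge0; lra.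
have B0 : 0 <= B.
  have -> : B = (1 - p) * (qH * (qL + q1)) + p * (qL * (qH + q2)) by rewrite /B /qL; ring.
  apply: addr_ge0; apply: mulr_ge0; try lra; apply: mulr_ge0; lra.
have piBE : piB mu qH q1 q2 r = qH + q1 * p + q2 * p by rewrite /piB e2 pE.
have piB0 : 0 < qH + q1 * p + q2 * p.
  by apply: ltr_wpDr; [apply: mulr_ge0; lra | apply: ltr_wpDr => //; apply: mulr_ge0; lra].
have piD0 : 0 < 1 - (qH + q1 * p + q2 * p).
  have u1 : 0 <= q1 * (1 - p) by apply: mulr_ge0; lra.
  have u2 : 0 <= q2 * (1 - p) by apply: mulr_ge0; lra.
  move: hL; rewrite /qL => hL; nra.
have hB : {in types, forall i, Num.max (UB mu qH q1 q2 r i - U0 qH q1 q2 i) 0 =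
   (1/2 + 1 * i) * (A / (qH + q1 * p + q2 * p)) + (1/2 + (-1) * i) * (B / (qH + q1 * p + q2 * p))}.
  move=> i; rewrite inE => /tyE /andP[i1 i2].
  have -> : UB mu qH q1 q2 r i - U0 qH q1 q2 i =
    (1/2 + 1 * i) * (A / (qH + q1 * p + q2 * p)) + (1/2 + (-1) * i) * (B / (qH + q1 * p + q2 * p)).
    rewrite /UB /U0 /pB_H /pB_1 /pB_2 piBE e2 /A /B /qL.
    rewrite pE. field; rewrite gt_eqF //.
  rewrite max_l //; apply: addr_ge0; apply: mulr_ge0; try lra; apply: divr_ge0; lra.
have hD : {in types, forall i, Num.max (UD mu qH q1 q2 r i - U0 qH q1 q2 i) 0 = 0}.
  move=> i; rewrite inE => /tyE /andP[i1 i2].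
  have -> : UD mu qH q1 q2 r i - U0 qH q1 q2 i =
    - (((1/2 + 1 * i) * A + (1/2 + (-1) * i) * B) / (1 - (qH + q1 * p + q2 * p))).
    rewrite /UD /U0 /pD_H /pD_1 /pD_2 /piD piBE e2 /A /B /qL pE.
    field; rewrite gt_eqF //.
  rewrite max_r // oppr_le0; apply: divr_ge0; last lra.
  apply: addr_ge0; apply: mulr_ge0; lra.
rewrite /value /= (eq_Rintegral _ hB) (eq_Rintegral _ hD) Rint_PM //; last first.
- by apply: divr_ge0; lra.
- by apply: divr_ge0; lra.
rewrite Rintegral_cst; last exact: types_meas.
rewrite /piD piBE /A /B /qL.
field; rewrite gt_eqF //.
Qed.

Theorem proposition5 (R : realType) (mu : probability R R) (qH q1 q2 qL : R) :
  (* F has support in [-1/2,1/2] *)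
  mu `[(- (1/2)), 1/2]%classic = 1%E ->
  (* F is continuous *)
  continuous (cdf_of mu) ->
  (* F has full support on [-1/2,1/2] *)
  (forall a b : R, - (1/2) <= a -> a < b -> b <= 1/2 -> cdf_of mu a < cdf_of mu b) ->
  (* F is symmetric *)
  (forall i : R, - (1/2) <= i <= 1/2 -> cdf_of mu (- i) = 1 - cdf_of mu i) ->
  (* prior over versions *)
  0 < qH -> 0 < q1 -> 0 < q2 -> 0 < qL -> qH + q1 + q2 + qL = 1 ->
  let sigma := qH / qL in
  let V := value mu qH q1 q2 in
  (sigma < 1 -> forall r1 r2 : R, 0 < r1 -> r1 < r2 -> r2 < 1 -> V r2 < V r1) /\
  (sigma > 1 -> forall r1 r2 : R, 0 < r1 -> r1 < r2 -> r2 < 1 -> V r1 < V r2) /\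
  (sigma = 1 -> forall r1 r2 : R, 0 < r1 -> r2 < 1 -> r1 < 1 -> 0 < r2 -> V r1 = V r2).
Proof.
move=> supp Fc full sym hH h1 h2 hL hsum sigma V.
have hL' : 0 < 1 - qH - q1 - q2 by lra.
have qLE : 1 - qH - q1 - q2 = qL by lra.
have VE : forall r, V r = (qH * (2 * qL + q1 + q2) +
   phi1 mu r * ((q1 + q2) * (qL - qH))) / 2.
  by move=> r; rewrite /V value_eq // qLE.
have mono : forall r1 r2, 0 < r1 -> r1 < r2 -> r2 < 1 -> phi1 mu r2 < phi1 mu r1.
  move=> r1 r2 r10 r12 r21; rewrite /phi1 ltrD2l ltrN2; apply: full; lra.
have qL0 : qL != 0 by rewrite gt_eqF.
split; [|split].
- move=> hs r1 r2 r10 r12 r21; rewrite !VE.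
  have hq : qH < qL by move: hs; rewrite /sigma ltr_pdivrMr // mul1r.
  have := mono _ _ r10 r12 r21 => hm.
  have K : 0 < (q1 + q2) * (qL - qH) by apply: mulr_gt0; lra.
  rewrite ltr_pM2r ?invr_gt0 ?ltr0n // ltrD2l ltr_pM2r //.
- move=> hs r1 r2 r10 r12 r21; rewrite !VE.
  have hq : qL < qH by move: hs; rewrite /sigma ltr_pdivlMr // mul1r.
  have := mono _ _ r10 r12 r21 => hm.
  have K : 0 < (q1 + q2) * (qH - qL) by apply: mulr_gt0; lra.
  rewrite ltr_pM2r ?invr_gt0 ?ltr0n // ltrD2l.
  have e : forall x, x * ((q1 + q2) * (qL - qH)) = - (x * ((q1 + q2) * (qH - qL))).
    by move=> x; ring.
  rewrite !e.
  by rewrite ltrN2 ltr_pM2r.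
- move=> hs r1 r2 _ _ _ _; rewrite !VE.
  have hq : qH = qL.
    have : qH = qH / qL * qL by rewrite divfK.
    by rewrite -/sigma hs mul1r.
  by rewrite hq subrr !mulr0.
Qed.
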